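(* Let $P\subseteq\mathbb{C}$ be a finitely generated field extension of $\mathbb{Q}$, $q$ a prime, and $\epsilon$ a root of unity of order $q$. If $a\in P$ is $q$-simple in $P$, then $a$ is $q$-simple in $P(\epsilon)$.
   Context: $\mu$ is the group of all roots of unity in $\mathbb{C}^\times$. For a field $K\subseteq\mathbb{C}$ and integer $k>1$, a nonzero $a\in K$ is $k$-simple in $K$ if $a\notin\mu$ and for all $b\in K$, $\epsilon\in\mu$ and integers $d$, $a^d=b^k\epsilon$ implies $k\mid d$. *)

(* Defs.v *)
From HB Require Import structures.
From mathcomp Require Import all_boot all_order all_algebra.
From mathcomp Require Import reals.
From mathcomp.real_closed Require Import complex.
Set Implicit Arguments. Unset Strict Implicit. Unset Printing Implicit Defensive.
Import Order.TTheory GRing.Theory Num.Theory.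
Local Open Scope ring_scope.

Section Defs.
Variable R : realType.
Local Notation C := (R[i]).

Definition is_subfield (K : C -> Prop) : Prop :=
  K 1 /\
  (forall x y, K x -> K y -> K (x - y)) /\
  (forall x y, K x -> K y -> K (x * y)) /\
  (forall x, K x -> x != 0 -> K x^-1).

Definition gen_field (S : C -> Prop) : C -> Prop :=
  fun x => forall L, is_subfield L -> (forall y, S y -> L y) -> L x.

(* K is finitely generated over Q: K is the subfield generated by a finite
   list of elements (every subfield of C contains Q). *)
Definition fin_gen_over_Q (K : C -> Prop) : Prop :=
  exists s : seq C, forall x, K x <-> gen_field (fun y => y \in s) x.

Definition adjoin (K : C -> Prop) (e : C) : C -> Prop :=
  gen_field (fun y => K y \/ y = e).

Definition root_of_unity (x : C) : Prop := exists n : nat, (0 < n)%N /\ x ^+ n = 1.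

Definition k_simple (k : nat) (K : C -> Prop) (a : C) : Prop :=
  K a /\ a != 0 /\ ~ root_of_unity a /\
  (forall (b eps : C) (d : int), K b -> root_of_unity eps ->
      a ^ d = b ^+ k * eps -> (k%:Z %| d)%Z).
End Defs.

(* Main.v *)
Require Import Defs.
From HB Require Import structures.
From mathcomp Require Import all_boot all_order all_algebra.
From mathcomp Require Import boolp reals zify.
From mathcomp.real_closed Require Import complex.
Set Implicit Arguments. Unset Strict Implicit. Unset Printing Implicit Defensive.
Import Order.TTheory GRing.Theory Num.Theory.
Local Open Scope ring_scope.

Section Main.
Variables (R : realType) (P : R[i] -> Prop).
Hypothesis hP : is_subfield P.
Definition pb : {pred R[i]} := fun x => `[< P x >].
Lemma pbP x : reflect (P x) (x \in pb).
Proof. exact: asboolP. Qed.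
Lemma pb_closed : GRing.divring_closed pb.
Proof.
case: hP => h1 [hB [hM hV]]; split.
- exact/pbP.
- by move=> x y /pbP hx /pbP hy; apply/pbP; apply: hB.
- move=> x y /pbP hx /pbP hy; apply/pbP; have [->|y0] := eqVneq y 0.
    by rewrite invr0 mulr0; have := hB _ _ h1 h1; rewrite subrr.
  by apply: hM => //; apply: hV.
Qed.
Record B := mkB {vB : R[i]; vBP : vB \in pb}.
HB.instance Definition _ := [isSub for vB].
HB.instance Definition _ := [Choice of B by <:].
HB.instance Definition _ := GRing.SubChoice_isSubIntegralDomain.Build _ _ B pb_closed.
HB.instance Definition _ := [SubIntegralDomain_isSubField of B by <:].

Local Notation C := R[i].
Variables (q : nat) (eps : C).
Hypotheses (hq : prime q) (he : q.-primitive_root eps).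

Definition ev (g : {poly B}) : C := (map_poly val g).[eps].
Lemma evM g h : ev (g * h) = ev g * ev h.
Proof. by rewrite /ev rmorphM hornerM. Qed.
Lemma evB g h : ev (g - h) = ev g - ev h.
Proof. by rewrite /ev rmorphB hornerD hornerN. Qed.
Lemma evC c : ev c%:P = val c.
Proof. by rewrite /ev map_polyC hornerC. Qed.
Lemma ev1 : ev 1 = 1.
Proof. by rewrite -[1]/(1%:P) evC rmorph1. Qed.
Lemma evX : ev 'X = eps.
Proof. by rewrite /ev map_polyX hornerX. Qed.
Lemma evXn g n : ev (g ^+ n) = ev g ^+ n.
Proof. by rewrite /ev rmorphXn horner_exp. Qed.

Lemma eps1 : eps != 1.
Proof.
apply/eqP => e1; have := prim_order_dvd he 1; rewrite e1 expr1 eqxx.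
by rewrite dvdn1 => /eqP q1; move: hq; rewrite q1.
Qed.

Lemma size_w : exists2 g : {poly B}, g != 0 & (size g <= q)%N /\ ev g = 0.
Proof.
have q0 : (0 < q)%N by apply: prime_gt0.
pose w : {poly B} := \sum_(i < q) 'X ^+ (q.-1 - i) * 1 ^+ i.
have Ew : 'X ^+ q - 1 = ('X - 1) * w by rewrite -subrXX expr1n.
have X0 : ('X ^+ q - 1 : {poly B}) != 0.
  by rewrite -size_poly_eq0 size_Xn_sub_1.
have w0 : w != 0 by apply: contraNneq X0 => w0; rewrite Ew w0 mulr0.
exists w => //; split.
  have := congr1 (fun r : {poly B} => size r) Ew; rewrite /=; rewrite size_Xn_sub_1 // size_mul ?w0 //.
    by rewrite -[1]/(1%:P) size_XsubC add2n /= => -[->].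
  by rewrite -size_poly_eq0 -[1]/(1%:P) size_XsubC.
have := congr1 ev Ew; rewrite evM evB evXn evX ev1 (prim_expr_order he) subrr.
move/esym/eqP; rewrite mulf_eq0 => /orP[|/eqP //]; rewrite evB evX ev1 subr_eq0 (negPf eps1) //.
Qed.

Lemma minpoly_ex : exists p : {poly B}, [/\ p \is monic, ev p = 0, (size p <= q)%N &
  forall g, g != 0 -> ev g = 0 -> (size p <= size g)%N].
Proof.
pose Q n := `[< exists g : {poly B}, [/\ g != 0, size g = n & ev g = 0] >].
have exQ : exists n, Q n.
  by case: size_w => g g0 [_ eg]; exists (size g); apply/asboolP; exists g.
case: (ex_minnP exQ) => n /asboolP [g [g0 sg eg]] minn.
have lc0 : lead_coef g != 0 by rewrite lead_coef_eq0.
exists ((lead_coef g)^-1 *: g); split.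
- by rewrite monicE lead_coefZ mulVf.
- by rewrite -mul_polyC evM eg mulr0.
- case: size_w => w w0 [sw ew]; rewrite size_scale ?invr_eq0 // sg.
  apply: leq_trans (minn _ _) sw; by apply/asboolP; exists w.
- move=> h h0 eh; rewrite size_scale ?invr_eq0 // sg; apply: minn.
  by apply/asboolP; exists h.
Qed.

Lemma evD g h : ev (g + h) = ev g + ev h.
Proof. by rewrite /ev rmorphD hornerD. Qed.

Definition S x := exists g, x = ev g.

Lemma detX n' (M : 'M[B]_n'.+1) k : \det (M ^+ k) = \det M ^+ k.
Proof.
elim: k => [|k IH]; first by rewrite !expr0 det1.
by rewrite !exprS detM IH.
Qed.

Section MP.
Variable p : {poly B}.
Hypotheses (pm : p \is monic) (pe : ev p = 0)
  (pmin : forall g, g != 0 -> ev g = 0 -> (size p <= size g)%N) (psq : (size p <= q)%N).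

Lemma p0 : p != 0.
Proof. exact: monic_neq0. Qed.

Lemma mp_dvd g : ev g = 0 -> p %| g.
Proof.
move=> eg; apply/modp_eq0P; apply/eqP.
apply: contraTT (ltn_modpN0 g p0) => r0; rewrite -leqNgt; apply: pmin => //.
have E : g %% p = g - g %/ p * p.
  by rewrite {2}(divp_eq g p) addrAC subrr add0r.
by rewrite E evB evM pe mulr0 eg subrr.
Qed.

Lemma ev_unit g : ev g != 0 -> exists u, ev u * ev g = 1.
Proof.
move=> eg.
have cop : coprimep p g.
  rewrite coprimep_def; set d := gcdp p g.
  have d0 : d != 0 by rewrite gcdp_eq0 negb_and p0.
  have Eg : g = g %/ d * d by rewrite divpK // dvdp_gcdr.
  have Ep : p = p %/ d * d by rewrite divpK // dvdp_gcdl.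
  have ed : ev d != 0 by apply: contraNneq eg => ed; rewrite Eg evM ed mulr0.
  have e1 : ev (p %/ d) = 0.
    by apply/eqP; move: pe; rewrite {1}Ep evM => /eqP; rewrite mulf_eq0 (negPf ed) orbF.
  have q0 : p %/ d != 0 by apply: contraNneq p0 => q0; rewrite Ep q0 mul0r.
  have := pmin q0 e1; rewrite size_divp //.
  have : (0 < size d)%N by rewrite size_poly_gt0.
  have : (0 < size p)%N by rewrite size_poly_gt0 p0.
  move: (size d) (size p) => a b; lia.
case/Bezout_eq1_coprimepP: cop => [[u v]] /= E.
exists v; have := congr1 ev E; rewrite evD !evM pe mulr0 add0r ev1 //.
Qed.

Lemma S_sub : is_subfield S.
Proof.
split; first by exists 1; rewrite ev1.
split; first by move=> x y [g ->] [h ->]; exists (g - h); rewrite evB.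
split; first by move=> x y [g ->] [h ->]; exists (g * h); rewrite evM.
move=> x [g ->] g0; case: (ev_unit g0) => u hu; exists u.
by apply: mulr1_eq; rewrite mulrC.
Qed.

Lemma adj_S x : adjoin P eps x -> S x.
Proof.
move=> hx; apply: (hx S S_sub) => y [Py|->]; last by exists (polyX B); rewrite evX.
have yb : y \in pb by apply/pbP.
by exists ((Sub y yb : B)%:P); rewrite evC SubK.
Qed.

Lemma key n' (A : 'M[B]_n'.+1) : char_poly A = p ->
  forall g h, ev g = ev h -> horner_mx A g = horner_mx A h.
Proof.
move=> cA g h e; have : p %| g - h by apply: mp_dvd; rewrite evB e subrr.
case/dvdpP => k Ek; apply/eqP; rewrite -subr_eq0 -rmorphB Ek rmorphM.
by rewrite -cA /= Cayley_Hamilton mulr0.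
Qed.


Lemma main_simple (a b eta : C) (d : int) : k_simple q P a -> S b ->
  Defs.root_of_unity eta -> a ^ d = b ^+ q * eta -> (q%:Z %| d)%Z.
Proof.
case=> Pa [a0 [nra simp]] [g ->] [k [k0 ek]] E.
have pa : a \in pb by apply/pbP.
pose al : B := Sub a pa.
have hal : val al = a by rewrite SubK.
have Sd : ev (al ^ d)%:P = a ^ d by rewrite evC -hal; apply: fmorphXz.
have gn0 : ev g != 0.
  apply: contraTneq (expfz_neq0 d a0) => g0.
  by rewrite E g0 expr0n eqn0Ngt prime_gt0 // mul0r eqxx.
have [h eh] : S eta.
  have -> : eta = a ^ d * (ev g ^+ q)^-1.
    by rewrite E mulrAC divff ?mul1r // expf_neq0.
  case: S_sub => _ [_ [hM hV]]; apply: hM; first by exists (al ^ d)%:P.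
  apply: hV; last exact: expf_neq0.
  by exists (g ^+ q); rewrite evXn.
have E2 : ev (al ^ d)%:P = ev (g ^+ q * h) by rewrite Sd evM evXn -eh.
have hn : (0 < (size p).-1 < q)%N.
  have sp1 : (1 < size p)%N.
    rewrite ltnNge; apply/negP => /size1_polyC pc.
    move: pe; rewrite pc evC => /eqP; rewrite fmorph_eq0 => /eqP c0.
    by have := p0; rewrite pc c0 eqxx.
  by move: (size p) sp1 psq => s; lia.
have cK : char_poly (companionmx p) = p := companionmxK pm.
move: hn (companionmx p) cK; case: (size p).-1 => [//|n'] hn A cA.
have := key cA E2; move/(congr1 determinant).
rewrite /= horner_mx_C det_scalar rmorphM rmorphXn /= detM detX => Edet.
have hk : \det (horner_mx A h) ^+ k = 1.
  rewrite -detX -rmorphXn /= (key cA (g := h ^+ k) (h := 1)).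
    by rewrite rmorph1 det1.
  by rewrite evXn -eh ek ev1.
have := simp (val (\det (horner_mx A g))) (val (\det (horner_mx A h))) (d * n'.+1%:Z).
have -> : (q%:Z %| d * n'.+1%:Z)%Z = (q%:Z %| d)%Z.
  apply: Gauss_dvdzl; rewrite coprimezE /= prime_coprime //.
  by apply/negP => /dvdn_leq => /(_ isT); move: hn; lia.
apply.
- by apply/pbP; apply: valP.
- by exists k; split => //; rewrite -rmorphXn hk rmorph1.
rewrite -exprz_exp -[in LHS]hal -fmorphXz.
change (val (al ^ d) ^+ n'.+1 = val (\det (horner_mx A g)) ^+ q * val (\det (horner_mx A h))).
by rewrite -rmorphXn Edet rmorphM rmorphXn.
Qed.

End MP.
End Main.

Theorem lemma2p9 (R : realType) (P : R[i] -> Prop) (q : nat) (eps a : R[i]) :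
  is_subfield P -> fin_gen_over_Q P -> prime q -> q.-primitive_root eps ->
  k_simple q P a -> k_simple q (adjoin P eps) a.
Proof.
move=> hP _ hq he ha.
have [p [pm pe psq pmin]] := minpoly_ex hP hq he.
case: (ha) => Pa [a0 [nra _]].
split; first by move=> L _ hL; apply: hL; left.
split => //; split => // b e d hb he' E.
apply: (@main_simple _ _ hP _ _ hq he _ pm pe pmin psq _ _ _ _ ha _ he' E).
exact: (@adj_S _ _ hP _ _ hq he _ pm pe pmin psq _ hb).
Qed.
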